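(* Let $k\ge1$, and let $\mathcal P=\{p_1,\dots,p_{k^2}\}$ be a family of real polynomials in the commuting variables $x_1,\dots,x_{2k^2}$ admitting an nc representation $p(X,Y)$ of degree $d>1$. Let $s>t\ge2$ and $a\ne0$, and suppose that, counting over all polynomials, exactly $k$ terms of the form $a\,x_u^sx_v^t$ ($u\ne v$) appear in the family, namely $a\,x_{i_1}^sx_{j_1}^t,\dots,a\,x_{i_k}^sx_{j_k}^t$. If for each $n$ one of $x_{i_n},x_{j_n}$ is a diagonal entry of $X$ and the other is the diagonal entry of $Y$ in the same position, then $x_{i_1},\dots,x_{i_k}$ are the diagonal entries of one of the matrices $X,Y$ and $x_{j_1},\dots,x_{j_k}$ are the diagonal entries of the other.
   Context: The family $\mathcal P$ admits an nc representation $p(X,Y)$ if there are $k\times k$ matrices $X,Y$ whose $2k^2$ entries are the variables $x_1,\dots,x_{2k^2}$, each used exactly once, and a noncommutative polynomial $p$ in two letters with real coefficients such that the matrix $p(X,Y)$ is a $k\times k$ array whose entries are $p_1,\dots,p_{k^2}$, each exactly once. A ''term'' means a monomial with its nonzero coefficient after collecting like terms. *)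

(* Defs.v *)
From HB Require Import structures.
From mathcomp Require Import all_boot all_order all_algebra.
From mathcomp Require Import mpoly.
Set Implicit Arguments. Unset Strict Implicit. Unset Printing Implicit Defensive.
Import Order.TTheory GRing.Theory Num.Theory.
Local Open Scope ring_scope.

(* A noncommutative polynomial in two letters X (false) and Y (true) with
   coefficients in R is given by its coefficient function on words;
   it has degree d when all words longer than d have coefficient 0 and
   some word of length d has nonzero coefficient. *)
Definition ncpoly (R : Type) := seq bool -> R.

Definition nc_has_degree (R : ringType) (p : ncpoly R) (d : nat) : Prop :=
  (forall w : seq bool, (d < size w)%N -> p w = 0) /\
  (exists w : seq bool, size w = d /\ p w != 0).

Definition word_eval (A : ringType) (k : nat) (MX MY : 'M[A]_k) (w : seq bool)
  : 'M[A]_k :=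
  foldr (fun b M => (if b then MY else MX) *m M) 1%:M w.

Definition nc_eval (R : comRingType) (A : comRingType) (emb : R -> A)
    (p : ncpoly R) (d k : nat) (MX MY : 'M[A]_k) : 'M[A]_k :=
  \sum_(l < d.+1) \sum_(w : l.-tuple bool)
     (emb (p (tval w))) *: word_eval MX MY (tval w).

Definition var_mx (R : comRingType) (n k : nat) (V : 'M['I_n]_k)
  : 'M[{mpoly R[n]}]_k := map_mx (fun i => 'X_i) V.

(* X and Y together use each variable exactly once *)
Definition nc_var_layout (n k : nat) (X Y : 'M['I_n]_k) : Prop :=
  bijective (fun e : ('I_k * 'I_k) + ('I_k * 'I_k) =>
               match e with inl (i, j) => X i j | inr (i, j) => Y i j end).

Definition mono_st (n : nat) (u v : 'I_n) (s t : nat) : 'X_{1..n} :=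
  mnm_add (mnm_muln (mnm1 u) s) (mnm_muln (mnm1 v) t).

(* The family P = entries of p(X,Y) indexed by positions (i,j).
   The terms of the form a x_u^s x_v^t (u <> v) counted over all
   polynomials: triples (position, (u, v)). *)
Definition st_terms (R : comRingType) (n k : nat)
    (P : 'M[{mpoly R[n]}]_k) (a : R) (s t : nat)
  : {set ('I_k * 'I_k) * ('I_n * 'I_n)} :=
  [set e | (e.2.1 != e.2.2) && ((P e.1.1 e.1.2)@_(mono_st e.2.1 e.2.2 s t) == a)].

Definition diag_vars (n k : nat) (V : 'M['I_n]_k) : {set 'I_n} :=
  [set V m m | m : 'I_k].

(* Main.v *)
Require Import Defs.
From HB Require Import structures.
From mathcomp Require Import all_boot all_order all_algebra.
From mathcomp Require Import mpoly.
From mathcomp Require Import zify.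
Import Order.TTheory GRing.Theory Num.Theory.
Local Open Scope ring_scope.

Section Aux.
Variables (R : comRingType) (n : nat).

Lemma mcoefXMq (z : 'I_n) (q : {mpoly R[n]}) mu :
  ('X_z * q)@_mu = if (0 < mu z)%N then q@_(mu - U_(z))%MM else 0.
Proof.
case: ifP => hz.
  have -> : mu = (U_(z) + (mu - U_(z)))%MM.
    apply/mnmP => i; rewrite mnmDE mnmBE mnm1E.
    case: eqP => [<-|_]; last by rewrite subn0.
    by rewrite add1n subn1 prednK.
  by rewrite mulrC mcoeffMX addmC addmK.
rewrite mcoeffM big1 // => kk /eqP hk.
rewrite mcoeffX; case: eqP => [hE|_]; last by rewrite mul0r.
exfalso; move: hz; rewrite hk mnmDE -hE mnm1E eqxx //.
Qed.

Lemma mono_pt (u v z : 'I_n) a b :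
  mono_st u v a b z = ((u == z) * a + (v == z) * b)%N.
Proof. by rewrite /mono_st mnmDE !mulmnE !mnm1E mulnC [(_ * b)%N]mulnC. Qed.

Lemma mono_subu (u v : 'I_n) a b : u != v -> (0 < a)%N ->
  (mono_st u v a b - U_(u))%MM = mono_st u v a.-1 b.
Proof.
move=> uv ha; apply/mnmP => z; rewrite mnmBE !mono_pt mnm1E.
case: (eqVneq u z) => [<-|_]; first by rewrite eq_sym (negbTE uv) !mul1n !mul0n !addn0 subn1.
by rewrite !mul0n !add0n subn0.
Qed.

Lemma mono_swap (u v : 'I_n) a b : mono_st u v a b = mono_st v u b a.
Proof. by rewrite /mono_st addmC. Qed.
End Aux.

Section W.
Variables (R : comRingType) (n k : nat) (X Y : 'M['I_n]_k).
Hypothesis hX : forall i j i' j', X i j = X i' j' -> i = i' /\ j = j'.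
Hypothesis hY : forall i j i' j', Y i j = Y i' j' -> i = i' /\ j = j'.
Hypothesis hXY : forall i j i' j', X i j != Y i' j'.

Lemma mono_eq0 (u v : 'I_n) a b : u != v ->
  (mono_st u v a b == 0%MM) = (a == 0%N) && (b == 0%N).
Proof.
move=> uv; apply/eqP/andP => [h|[/eqP-> /eqP->]].
  have hu := congr1 (fun m : 'X_{1..n} => m u) h.
  have hv := congr1 (fun m : 'X_{1..n} => m v) h.
  move: hu hv => /=; rewrite !mono_pt !mnm0E eqxx (negbTE uv) eq_sym (negbTE uv).
  rewrite eqxx => h1 h2; split; apply/eqP; [move: h1|move: h2]; rewrite /= ?mul1n ?mul0n ?addn0 ?add0n //.
by apply/mnmP => z; rewrite mono_pt mnm0E !muln0.
Qed.

Lemma eqXX i j i' j' : (X i j == X i' j') = (i == i') && (j == j').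
Proof.
apply/eqP/andP => [/hX [-> ->]|[/eqP-> /eqP->]] //.
Qed.
Lemma eqYY i j i' j' : (Y i j == Y i' j') = (i == i') && (j == j').
Proof.
apply/eqP/andP => [/hY [-> ->]|[/eqP-> /eqP->]] //.
Qed.
Lemma eqXY i j i' j' : (X i j == Y i' j') = false.
Proof. exact/negbTE/hXY. Qed.
Lemma eqYX i j i' j' : (Y i j == X i' j') = false.
Proof. by rewrite eq_sym eqXY. Qed.

Lemma word_coef (w : seq bool) (m i j : 'I_k) a b :
  (word_eval (var_mx R X) (var_mx R Y) w i j)@_(mono_st (X m m) (Y m m) a b)
  = [&& a == count negb w, b == count id w, i == j &
        (size w == 0%N) || (i == m)]%:R.
Proof.
have uv := hXY m m m m.
elim: w i j a b => [|c w IH] i j a b.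
  rewrite /word_eval /= mxE -mpolyC_nat mcoeffC mono_eq0 //.
  by case: (i == j); case: (a == 0%N); case: (b == 0%N); rewrite /= ?mulr1 ?mulr0 ?mul0r.
rewrite /word_eval /= -/(word_eval _ _ w) mxE raddf_sum /=.
case: c => /=.
- under eq_bigr => l _ do rewrite mxE mcoefXMq mono_pt eqXY eqYY.
  rewrite (bigD1 m) //= big1 => [|l /negbTE hl]; last by rewrite [m == l]eq_sym hl andbF /= ?mul0n ?muln0.
  rewrite eqxx andbT addr0; case: (eqVneq m i) => [<-|hmi] /=.
    case: b => [|b] /=; first by rewrite andbF.
    have vu : Y m m != X m m by rewrite eq_sym.
    rewrite mono_swap mono_subu // -mono_swap IH /=.
    by rewrite eqxx orbT add0n add1n eqSS andbT.
  by rewrite !andbF.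
- under eq_bigr => l _ do rewrite mxE mcoefXMq mono_pt eqYX eqXX.
  rewrite (bigD1 m) //= big1 => [|l /negbTE hl]; last by rewrite [m == l]eq_sym hl andbF /= ?mul0n ?muln0.
  rewrite eqxx andbT addr0; case: (eqVneq m i) => [<-|hmi] /=.
    case: a => [|a] /=; first by [].
    rewrite mono_subu // IH /=.
    by rewrite eqxx orbT add1n eqSS andbT.
  by rewrite !andbF.
Qed.

Lemma size_cnt (w : seq bool) : size w = (count negb w + count id w)%N.
Proof. by elim: w => //= c w ->; case: c; rewrite /= ?add0n ?addn0 ?addSn ?addnS. Qed.

Lemma mcsum (I : Type) (r : seq I) (P : pred I) (F : I -> {mpoly R[n]}) mu :
  (\sum_(i <- r | P i) F i)@_mu = \sum_(i <- r | P i) (F i)@_mu.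
Proof. exact: raddf_sum. Qed.

Definition Cst (p : ncpoly R) (d a b : nat) : R :=
  \sum_(l < d.+1) \sum_(w : l.-tuple bool)
     p (tval w) * ((a == count negb w) && (b == count id w))%:R.

Lemma P_coef (p : ncpoly R) (d : nat) (m i j : 'I_k) a b : (0 < a + b)%N ->
  (nc_eval (fun c : R => c%:MP) p d (var_mx R X) (var_mx R Y) i j)
     @_(mono_st (X m m) (Y m m) a b) = ((i == m) && (j == m))%:R * Cst p d a b.
Proof.
move=> hab; rewrite /nc_eval /Cst summxE mcsum mulr_sumr; apply: eq_bigr => l _.
rewrite summxE mcsum mulr_sumr; apply: eq_bigr => w _.
rewrite mxE mcoeffCM word_coef mulrCA; congr (_ * _).
case: (eqVneq a (count negb w)) => [ea|] /=; last by rewrite mulr0.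
case: (eqVneq b (count id w)) => [eb|] /=; last by rewrite mulr0.
rewrite mulr1 size_cnt -ea -eb; move: hab; rewrite lt0n => /negbTE -> /=.
by case: (eqVneq i m) => [->|_]; rewrite ?eqxx ?andbT ?andbF // eq_sym.
Qed.
End W.

Theorem lemma2p19 (R : realFieldType) (k : nat) (X Y : 'M['I_(2 * k ^ 2)]_k)
    (p : ncpoly R) (d : nat) (s t : nat) (a : R) :
  (1 <= k)%N ->
  nc_var_layout X Y ->
  nc_has_degree p d -> (1 < d)%N ->
  (t < s)%N -> (2 <= t)%N -> a != 0 ->
  let P := nc_eval (fun c : R => c%:MP) p d (var_mx R X) (var_mx R Y) in
  let T := st_terms P a s t in
  #|T| = k ->
  (forall e, e \in T -> exists m : 'I_k,
      (e.2.1 = X m m /\ e.2.2 = Y m m) \/ (e.2.1 = Y m m /\ e.2.2 = X m m)) ->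
  ([set e.2.1 | e in T] = diag_vars X /\ [set e.2.2 | e in T] = diag_vars Y) \/
  ([set e.2.1 | e in T] = diag_vars Y /\ [set e.2.2 | e in T] = diag_vars X).
Proof.
move=> hk lay _ _ hts ht2 ha P T hT hdiag.
have inj := bij_inj lay.
have hX : forall i j i' j', X i j = X i' j' -> i = i' /\ j = j'.
  by move=> i j i' j' /(inj (inl (i, j)) (inl (i', j'))) [-> ->].
have hY : forall i j i' j', Y i j = Y i' j' -> i = i' /\ j = j'.
  by move=> i j i' j' /(inj (inr (i, j)) (inr (i', j'))) [-> ->].
have hXY : forall i j i' j', X i j != Y i' j'.
  by move=> i j i' j'; apply/eqP => /(inj (inl (i, j)) (inr (i', j'))).
have pst : (0 < s + t)%N by rewrite addn_gt0 (ltnW ht2) orbT.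
have pts : (0 < t + s)%N by rewrite addnC.
have PA : forall i j m, (P i j)@_(mono_st (X m m) (Y m m) s t)
   = ((i == m) && (j == m))%:R * Cst R p d s t.
  by move=> i j m; rewrite /P (@P_coef _ _ _ X Y hX hY hXY).
have PB : forall i j m, (P i j)@_(mono_st (Y m m) (X m m) s t)
   = ((i == m) && (j == m))%:R * Cst R p d t s.
  by move=> i j m; rewrite mono_swap /P (@P_coef _ _ _ X Y hX hY hXY).
set CA := Cst R p d s t == a. set CB := Cst R p d t s == a.
pose fA (m : 'I_k) := ((m, m), (X m m, Y m m)).
pose fB (m : 'I_k) := ((m, m), (Y m m, X m m)).
have memA m : (fA m \in T) = CA.
  by rewrite inE /= hXY PA !eqxx mul1r.
have memB m : (fB m \in T) = CB.
  by rewrite inE /= eq_sym hXY PB !eqxx mul1r.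
have inT e : e \in T -> exists m, (e = fA m /\ CA) \/ (e = fB m /\ CB).
  move=> eT; have [m [[h1 h2]|[h1 h2]]] := hdiag e eT; exists m.
    left; move: eT; case: e h1 h2 => [[i j] [u v]] /= -> -> .
    rewrite inE /= PA; case: (eqVneq i m) => [->|_]; case: (eqVneq j m) => [->|_];
      rewrite /= ?mul1r ?mul0r => /andP [_ h]; rewrite ?h //; by move: ha; rewrite (eqP h) eqxx.
  right; move: eT; case: e h1 h2 => [[i j] [u v]] /= -> -> .
  rewrite inE /= PB; case: (eqVneq i m) => [->|_]; case: (eqVneq j m) => [->|_];
    rewrite /= ?mul1r ?mul0r => /andP [_ h]; rewrite ?h //; by move: ha; rewrite (eqP h) eqxx.
have fAi : injective fA by move=> m m' [].
have fBi : injective fB by move=> m m' [].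
case hA : CA; case hB : CB.
- have sub : fA @: setT :|: fB @: setT \subset T.
    apply/subsetP => x; rewrite inE => /orP [] /imsetP [m _ ->]; by rewrite ?memA ?memB.
  have dis : fA @: setT :&: fB @: setT = set0.
    apply/setP => x; rewrite !inE; apply/negP => /andP [/imsetP [m _ ->] /imsetP [m' _ []]].
    by move=> _ _ /eqP; rewrite (negbTE (hXY _ _ _ _)).
  have := subset_leq_card sub; rewrite cardsU dis cards0 subn0 !card_imset // cardsT card_ord hT.
  lia.
- left; split; apply/setP => x; apply/imsetP/imsetP.
  + move=> [e eT ->]; have [m [[-> _]|[-> hb]]] := inT e eT; first by exists m.
    by rewrite hB in hb.
  + by move=> [m _ ->]; exists (fA m); rewrite ?memA.
  + move=> [e eT ->]; have [m [[-> _]|[-> hb]]] := inT e eT; first by exists m.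
    by rewrite hB in hb.
  + by move=> [m _ ->]; exists (fA m); rewrite ?memA.
- right; split; apply/setP => x; apply/imsetP/imsetP.
  + move=> [e eT ->]; have [m [[-> ha']|[-> _]]] := inT e eT; last by exists m.
    by rewrite hA in ha'.
  + by move=> [m _ ->]; exists (fB m); rewrite ?memB.
  + move=> [e eT ->]; have [m [[-> ha']|[-> _]]] := inT e eT; last by exists m.
    by rewrite hA in ha'.
  + by move=> [m _ ->]; exists (fB m); rewrite ?memB.
- have T0 : T = set0.
    apply/setP => e; rewrite in_set0; apply/negP => eT.
    by have [m [[_ h]|[_ h]]] := inT e eT; rewrite ?hA ?hB in h.
  exfalso; move: hT; rewrite T0 cards0 => h0; by move: hk; rewrite -h0.
Qed.
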